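(* Let $\mathbf{G}=(\mathcal{V},\mathcal{E})$ be a strongly connected directed graph on $\mathcal{V}=\{1,\dots,m\}$ with diameter $\delta(\mathbf{G})$, let $a>0$, and let each node $i$ hold a private input $x_i\in[0,a)$. If the TITAN algorithm (described in the context) is run with parameters $T\ge\delta(\mathbf{G})$ and a positive integer $k\le m$, then it terminates after $T\lceil m/k\rceil$ rounds of the recovery phase and every node outputs exactly $\bar{x}=\frac{1}{m}\sum_{i=1}^m x_i$.
   Context: For $a'>0$ and real $y$, $\mathrm{mod}(y,a')=y-pa'$, where $p$ is the unique integer with $y-pa'\in[0,a')$. $\mathcal{N}_i^{in}$ and $\mathcal{N}_i^{out}$ denote the in- and out-neighbors of node $i$; $\delta(\mathbf{G})$ is the directed diameter. Communication is synchronous and reliable. TITAN algorithm: (1) Obfuscation: each node $i$ draws, for every out-neighbor $j$, an independent random number $r_{ij}$ uniform on $[0,ma)$ and sends it to $j$; node $i$ computes $t_i=\mathrm{mod}\big(\sum_{j\in\mathcal{N}_i^{in}} r_{ji}-\sum_{j\in\mathcal{N}_i^{out}} r_{ij},\, ma\big)$ and the perturbed input $\tilde{x}_i=\mathrm{mod}(x_i+t_i,ma)$. (2) Distributed recovery: the nodes run the Top-$k$ consensus primitive $\lceil m/k\rceil$ times in succession on the pairs $(\tilde{x}_i,i)$, each run using $T$ rounds and excluding the pairs already recovered in previous runs; each node stores the recovered pairs. The Top-$k$ primitive: each node keeps length-$k$ lists $L_i,\ell_i$ of values and identifiers, initialized with its own (not yet recovered) pair and empty entries; in each of $T$ rounds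 every node sends its lists to its out-neighbors and replaces its lists by the (up to) $k$ largest value–identifier pairs among its own and received ones, in decreasing order of value with ties broken in favor of larger identifier. (3) Output: each node $i$, having recovered values $r_i[1],\dots,r_i[m]$, outputs $\frac{1}{m}\mathrm{mod}\big(\sum_{l=1}^m r_i[l],ma\big)$. *)

(* Defs.v *)
From HB Require Import structures.
From mathcomp Require Import all_boot all_order all_algebra.
From mathcomp Require Import reals.
Set Implicit Arguments.
Unset Strict Implicit.
Unset Printing Implicit Defensive.
Import Order.TTheory GRing.Theory Num.Theory.
Local Open Scope ring_scope.

Section Titan.
Variable R : realType.

Definition rmod (y a' : R) : R := y - (Num.floor (y / a'))%:~R * a'.

Variable m : nat.
(* Directed graph on nodes 'I_m : E i j  <=>  (i, j) is an edge, i.e.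
   j is an out-neighbor of i and i is an in-neighbor of j. *)
Variable E : rel 'I_m.

Definition strongly_connected : Prop := forall i j : 'I_m, connect E i j.

Fixpoint reach (n : nat) (i : 'I_m) : {set 'I_m} :=
  match n with
  | 0 => [set i]
  | n'.+1 => reach n' i :|: [set y | [exists x in reach n' i, E x y]]
  end.

(* directed distance from i to j (shortest walk length; distances in a
   strongly connected graph on m nodes are < m) *)
Definition dist (i j : 'I_m) : nat := find (fun n => j \in reach n i) (iota 0 m).

Definition diameter : nat := \max_(i : 'I_m) \max_(j : 'I_m) dist i j.

Definition pair := (R * 'I_m)%type.

Definition pair_before (p q : pair) : bool :=
  (q.1 < p.1) || ((p.1 == q.1) && (q.2 <= p.2)%N).

Definition topk (k : nat) (s : seq pair) : seq pair :=
  take k (sort pair_before (undup s)).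

Definition topk_round (k : nat) (L : 'I_m -> seq pair) : 'I_m -> seq pair :=
  fun i => topk k (L i ++ flatten [seq L j | j <- enum 'I_m & E j i]).

Definition topk_run (k T : nat) (L0 : 'I_m -> seq pair) : 'I_m -> seq pair :=
  iter T (topk_round k) L0.

Definition recovery_step (k T : nat) (xt : 'I_m -> R)
    (S : 'I_m -> seq pair) : 'I_m -> seq pair :=
  let L0 := fun i => if (xt i, i) \in S i then [::] else [:: (xt i, i)] in
  let L := topk_run k T L0 in
  fun i => S i ++ L i.

Definition ceil_div (n k : nat) : nat := (n + k.-1) %/ k.

Definition recovery_rounds (k T : nat) : nat := T * ceil_div m k.

Definition recovered (k T : nat) (xt : 'I_m -> R) : 'I_m -> seq pair :=
  iter (ceil_div m k) (recovery_step k T xt) (fun _ => [::]).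

(* obfuscation phase; r i j is the random number sent by i to j (edge i->j) *)
Definition obf_t (a : R) (r : 'I_m -> 'I_m -> R) (i : 'I_m) : R :=
  rmod (\sum_(j < m | E j i) r j i - \sum_(j < m | E i j) r i j) (m%:R * a).

Definition perturbed (a : R) (x : 'I_m -> R) (r : 'I_m -> 'I_m -> R)
    (i : 'I_m) : R :=
  rmod (x i + obf_t a r i) (m%:R * a).

Definition titan_output (a : R) (k T : nat) (x : 'I_m -> R)
    (r : 'I_m -> 'I_m -> R) (i : 'I_m) : R :=
  (m%:R)^-1 *
    rmod (\sum_(p <- recovered k T (perturbed a x r) i) p.1) (m%:R * a).

End Titan.

(* Main.v *)
Require Import Defs.
From HB Require Import structures.
From mathcomp Require Import all_boot all_order all_algebra.
From mathcomp Require Import reals ring lra zify.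
Import Order.TTheory GRing.Theory Num.Theory.
Local Open Scope ring_scope.

Module Helpers.
Set Implicit Arguments.
Unset Strict Implicit.

Section Topk.
Variable R : realType.
Variable m : nat.
Local Notation P := (pair R m).
Local Notation pb := (@pair_before R m).

Lemma pb_total : total pb.
Proof.
move=> [p1 p2] [q1 q2]; rewrite /pair_before /=.
case: (ltgtP p1 q1) => [h|h|h] /=; rewrite ?orbT //=.
by rewrite leq_total.
Qed.

Lemma pb_trans : transitive pb.
Proof.
move=> [q1 q2] [p1 p2] [s1 s2]; rewrite /pair_before /=.
case/orP=> [h1|/andP[/eqP e1 h1]]; case/orP=> [h2|/andP[/eqP e2 h2]].
- by rewrite (lt_trans h2 h1).
- by rewrite -e2 h1.
- by rewrite e1 h2.
- by rewrite e1 e2 eqxx (leq_trans h2 h1) orbT.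
Qed.

Lemma pb_anti : antisymmetric pb.
Proof.
move=> [p1 p2] [q1 q2]; rewrite /pair_before /= => /andP[].
case/orP=> [h1|/andP[/eqP e1 h1]]; case/orP=> [h2|/andP[/eqP e2 h2]].
- by move: (lt_trans h1 h2); rewrite ltxx.
- by move: h1; rewrite e2 ltxx.
- by move: h2; rewrite e1 ltxx.
- by rewrite e1; congr (_, _); apply/val_inj/eqP; rewrite eqn_leq h1 h2.
Qed.

Definition srt (s : seq P) := sort pb (undup s).

Lemma srt_sorted s : sorted pb (srt s).
Proof. exact: sort_sorted pb_total _. Qed.

Lemma mem_srt s : srt s =i s.
Proof. by move=> z; rewrite /srt mem_sort mem_undup. Qed.

Lemma srt_uniq s : uniq (srt s).
Proof. by rewrite /srt sort_uniq undup_uniq. Qed.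

Lemma srt_sub (s s' : seq P) : {subset s' <= s} ->
  srt s' = filter (mem s') (srt s).
Proof.
move=> sub; apply: (sorted_eq pb_trans pb_anti).
- exact: srt_sorted.
- exact: (sorted_filter pb_trans _ (srt_sorted s)).
apply: uniq_perm; first exact: srt_uniq.
  by rewrite filter_uniq // srt_uniq.
move=> z; rewrite mem_srt mem_filter mem_srt /=.
by case e: (z \in s') => //=; rewrite (sub _ e).
Qed.

Lemma topkE k s : topk k s = take k (srt s).
Proof. by []. Qed.

Lemma topk_sub k (s s' : seq P) : {subset s' <= s} ->
  {subset topk k s <= s'} -> topk k s' = topk k s.
Proof.
move=> sub tsub; rewrite !topkE (srt_sub sub).
rewrite -{1}(cat_take_drop k (srt s)) filter_cat.
have -> : filter (mem s') (take k (srt s)) = take k (srt s).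
  by apply/all_filterP/allP => z /tsub.
case: (leqP (size (srt s)) k) => hk.
  by rewrite drop_oversize //= cats0 take_takel.
by rewrite take_size_cat // size_take hk.
Qed.

Lemma take_filter_mem (pr : pred P) (u : seq P) z k :
  z \in take k u -> pr z -> z \in take k (filter pr u).
Proof.
elim: u k => [|y u IH] [|k] //=.
rewrite in_cons; case: eqP => [-> _ ->|_ /= h hz]; first by rewrite mem_head.
case: (pr y); first by rewrite /= in_cons (IH _ h hz) orbT.
have := IH _ h hz; rewrite -(take_takel _ (leqnSn k)) => /mem_take //.
Qed.

Lemma topk_mono k (s t : seq P) z : {subset t <= s} ->
  z \in topk k s -> z \in t -> z \in topk k t.
Proof.
move=> sub; rewrite !topkE (srt_sub sub) => h ht.
exact: take_filter_mem.
Qed.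

Lemma mem_topk k (s : seq P) : {subset topk k s <= s}.
Proof. by move=> z; rewrite topkE => /mem_take; rewrite mem_srt. Qed.

Lemma topk_small k (s : seq P) : (size s <= 1)%N -> (0 < k)%N -> topk k s = s.
Proof.
case: s => [|p [|]] //= _; case: k => // k _.
Qed.

End Topk.


Section Graph.
Variable m : nat.
Variable E : rel 'I_m.

Lemma reachS n j i :
  (i \in reach E n.+1 j) = (i \in reach E n j) || [exists x in reach E n j, E x i].
Proof. by rewrite /= in_setU in_set. Qed.

Lemma reach_monoS n j : {subset reach E n j <= reach E n.+1 j}.
Proof. by move=> i h; rewrite reachS h. Qed.

Lemma reach_mono n n' j : (n <= n')%N -> {subset reach E n j <= reach E n' j}.
Proof.
move=> /subnK <-; elim: (n' - n)%N => [|d IH] //= i h.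
by apply: reach_monoS; apply: IH.
Qed.

Lemma path_reach j p : path E j p -> last j p \in reach E (size p) j.
Proof.
elim/last_ind: p => [|p z IH]; first by rewrite /= in_set1.
rewrite rcons_path last_rcons size_rcons => /andP[/IH h he].
rewrite reachS; apply/orP; right; apply/existsP; exists (last j p).
by rewrite h.
Qed.

Lemma conn_reach j i : connect E j i -> exists2 n, (n < m)%N & i \in reach E n j.
Proof.
case/connectP=> p pp ->; case: (shortenP pp) => p' pp' up' _.
exists (size p'); last exact: path_reach.
have := uniq_leq_size up' (fun z _ => mem_enum 'I_m z).
by rewrite size_enum_ord.
Qed.

Lemma reach_T T : strongly_connected E -> (diameter E <= T)%N ->
  forall j i, i \in reach E T j.
Proof.
move=> sc dT j i.
have hh : has (fun n => i \in reach E n j) (iota 0 m).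
  case: (conn_reach (sc j i)) => n nm hn; apply/hasP; exists n => //.
  by rewrite mem_iota.
have := nth_find 0%N hh; rewrite nth_iota; last by move: hh; rewrite has_find size_iota.
rewrite add0n => h.
have le : (dist E j i <= T)%N.
  apply: leq_trans dT; rewrite /diameter.
  apply: leq_trans (leq_bigmax j); exact: (leq_bigmax (F := fun i => dist E j i) i).
exact: (reach_mono le h).
Qed.

End Graph.


Section Run.
Variable R : realType.
Variable m : nat.
Variable E : rel 'I_m.
Variable k : nat.
Hypothesis kpos : (0 < k)%N.
Local Notation P := (pair R m).
Variable L0 : 'I_m -> seq P.
Hypothesis L0small : forall j, (size (L0 j) <= 1)%N.

Definition U n i := flatten [seq L0 j | j <- enum 'I_m & i \in reach E n j].

Lemma memU n i z : reflect (exists2 j, i \in reach E n j & z \in L0 j) (z \in U n i).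
Proof.
apply: (iffP flatten_mapP) => [[j]|[j hj hz]].
  by rewrite mem_filter => /andP[hj _] hz; exists j.
by exists j => //; rewrite mem_filter hj mem_enum.
Qed.

Lemma U_mono n i : {subset U n i <= U n.+1 i}.
Proof.
move=> z /memU[j hj hz]; apply/memU; exists j => //; exact: reach_monoS.
Qed.

Lemma U_step n x i : E x i -> {subset U n x <= U n.+1 i}.
Proof.
move=> ex z /memU[j hj hz]; apply/memU; exists j => //.
by rewrite reachS; apply/orP; right; apply/existsP; exists x; rewrite hj.
Qed.

Lemma topk_eq_mem (s s' : seq P) : s =i s' -> topk k s = topk k s'.
Proof.
move=> e; apply: topk_sub => z; first by rewrite e.
by move/mem_topk; rewrite e.
Qed.

Lemma run_U n i : topk_run E k n L0 i = topk k (U n i).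
Proof.
elim: n i => [|n IH] i.
  rewrite /topk_run /= -(topk_small (k:=k) (L0small i) kpos); apply: topk_eq_mem => z.
  apply/idP/memU => [h|[j hj hz]]; first by exists i => //; rewrite /= in_set1.
  by move: hj; rewrite /= in_set1 => /eqP ->.
rewrite /topk_run iterS -/(topk_run E k n L0) /topk_round.
apply: topk_sub => z.
  rewrite mem_cat => /orP[|/flatten_mapP[x]].
    by rewrite IH => /mem_topk; apply: U_mono.
  rewrite mem_filter mem_enum andbT IH => ex /mem_topk.
  exact: U_step.
move=> hz; have := mem_topk hz => /memU[j]; rewrite reachS => /orP[hj|].
  rewrite mem_cat IH => hzj; apply/orP; left.
  apply: (topk_mono (U_mono (i:=i) (n:=n))) hz _.
  by apply/memU; exists j.
case/existsP=> x /andP[hx ex] hzj; rewrite mem_cat; apply/orP; right.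
apply/flatten_mapP; exists x; first by rewrite mem_filter ex mem_enum.
rewrite IH; apply: (topk_mono (U_step ex)) hz _.
by apply/memU; exists j.
Qed.

Lemma run_all T : strongly_connected E -> (diameter E <= T)%N ->
  forall i, topk_run E k T L0 i = topk k (flatten [seq L0 j | j <- enum 'I_m]).
Proof.
move=> sc dT i; rewrite run_U; apply: topk_eq_mem => z.
apply/memU/flatten_mapP => [[j _ hz]|[j _ hz]]; exists j => //.
  by rewrite mem_enum.
exact: reach_T.
Qed.

End Run.


Lemma filter_notin_take (T : eqType) (u : seq T) n :
  uniq u -> [seq z <- u | z \notin take n u] = drop n u.
Proof.
move=> uu; have e := cat_take_drop n u.
move: (take n u) (drop n u) e => t d e; rewrite -e filter_cat.
move: uu; rewrite -e cat_uniq => /and3P[_ hd _].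
rewrite (@eq_in_filter _ _ pred0); last by move=> z ->.
rewrite filter_pred0 /= (@eq_in_filter _ _ predT) ?filter_predT // => z hz /=.
by apply/negP => ht; move/hasP: hd; apply; exists z.
Qed.

Section Rec.
Variable R : realType.
Variable m : nat.
Variable E : rel 'I_m.
Variables k T : nat.
Hypothesis kpos : (0 < k)%N.
Hypothesis sc : strongly_connected E.
Hypothesis dT : (diameter E <= T)%N.
Variable xt : 'I_m -> R.
Local Notation P := (pair R m).

Definition Pall : seq P := [seq (xt j, j) | j <- enum 'I_m].
Definition u := srt Pall.

Lemma Pall_uniq : uniq Pall.
Proof.
rewrite map_inj_uniq ?enum_uniq // => j1 j2 h; exact: (congr1 snd h).
Qed.

Lemma u_uniq : uniq u. Proof. exact: srt_uniq. Qed.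

Lemma size_u : size u = m.
Proof.
by rewrite /u /srt size_sort undup_id ?Pall_uniq // size_map size_enum_ord.
Qed.

Lemma rec_iter r : forall i,
  iter r (recovery_step E k T xt) (fun _ => [::]) i = take (r * k) u.
Proof.
elim: r => [|r IH] i; first by rewrite mul0n take0.
rewrite iterS /recovery_step /= IH run_all //; last by move=> j; case: ifP.
set L0 := (fun i0 : 'I_m => _).
have -> : topk k (flatten [seq L0 j | j <- enum 'I_m]) = take k (drop (r * k) u).
  rewrite -filter_notin_take ?u_uniq //.
  rewrite (@topk_sub _ _ k (filter (fun z => z \notin take (r * k) u) u) (flatten [seq L0 j | j <- enum 'I_m])).
  - rewrite topkE; congr take.
    rewrite /u (srt_sub (s := Pall)).
    + apply: eq_in_filter => z hz /=; rewrite mem_filter hz andbT //.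
    + by move=> z; rewrite mem_filter mem_srt => /andP[].
  - move=> z /flatten_mapP[j _]; rewrite /L0 IH; case: ifP => // hn.
    rewrite in_cons in_nil orbF => /eqP ->.
    by rewrite mem_filter hn mem_srt /Pall map_f // mem_enum.
  - move=> z /mem_topk; rewrite mem_filter mem_srt => /andP[hn /mapP[j _ ez]]; subst z.
    apply/flatten_mapP; exists j; first by rewrite mem_enum.
    by rewrite /L0 IH (negbTE hn) mem_head.
by rewrite -takeD mulSn addnC.
Qed.

End Rec.


Section Arith.
Variable R : realType.
Variable M : R.
Hypothesis Mpos : 0 < M.

Definition imul (y : R) := exists z : int, y = z%:~R * M.

Lemma imul_rmod y : imul (rmod y M - y).
Proof. by exists (- Num.floor (y / M)); rewrite /rmod mulrNz mulNr; ring. Qed.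

Lemma rmod_shift y z : rmod (y + z%:~R * M) M = rmod y M.
Proof.
rewrite /rmod mulrDl mulfK ?gt_eqF // floorDrz ?intr_int // intrKfloor intrD.
ring.
Qed.

Lemma rmod_id y : 0 <= y < M -> rmod y M = y.
Proof.
case/andP=> h0 h1; rewrite /rmod (@floor_def _ _ 0) ?mul0r ?subr0 //.
rewrite add0r /= divr_ge0 ?(ltW Mpos) //= ltr_pdivrMr // mul1r //.
Qed.

Lemma imul_sum (I : Type) (s : seq I) (F : I -> R) :
  (forall i, imul (F i)) -> imul (\sum_(i <- s) F i).
Proof.
move=> h; apply: (big_ind imul) => //; first by exists 0; rewrite mul0r.
by move=> _ _ [z1 ->] [z2 ->]; exists (z1 + z2); rewrite intrD mulrDl.
Qed.

End Arith.

End Helpers.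
Import Helpers.

Theorem theorem2 (R : realType) (m : nat) (E : rel 'I_m) (a : R)
    (x : 'I_m -> R) (r : 'I_m -> 'I_m -> R) (k T : nat) :
  strongly_connected E ->
  0 < a ->
  (forall i, 0 <= x i < a) ->
  (forall i j, E i j -> 0 <= r i j < m%:R * a) ->
  (diameter E <= T)%N ->
  (0 < k <= m)%N ->
  forall i : 'I_m, titan_output E a k T x r i = (m%:R)^-1 * \sum_(j < m) x j.
Proof.
move=> sc apos hx _ dT /andP[kpos km] i.
have mpos : (0 < m)%N by apply: leq_trans km.
set M := m%:R * a.
have Mpos : 0 < M by rewrite mulr_gt0 // ltr0n.
set xt := perturbed E a x r.
rewrite /titan_output /recovered (rec_iter kpos sc dT xt) take_oversize; last first.
  rewrite size_u /ceil_div.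
  have h1 := divn_eq (m + k.-1) k; have h2 := ltn_pmod (m + k.-1) kpos.
  move: h1 h2; set q := ((m + k.-1) %/ k)%N; set rr := ((m + k.-1) %% k)%N.
  rewrite -/M; lia.
congr (_ * _).
have -> : \sum_(p <- u xt) p.1 = \sum_(j < m) xt j.
  have pe : perm_eq (u xt) (Pall xt).
    by rewrite /u /srt perm_sort undup_id ?Pall_uniq.
  by rewrite (perm_big _ pe) /Pall big_map big_enum /=.
set d := fun j : 'I_m => \sum_(l < m | E l j) r l j - \sum_(l < m | E j l) r j l.
have d0 : \sum_(j < m) d j = 0.
  rewrite /d sumrB (exchange_big_dep xpredT) //=.
  by rewrite subrr.
have hI : imul M (\sum_(j < m) xt j - \sum_(j < m) x j).
  have -> : \sum_(j < m) xt j - \sum_(j < m) x j =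
     \sum_(j < m) ((xt j - (x j + obf_t E a r j)) + (obf_t E a r j - d j)) + \sum_(j < m) d j.
    rewrite -big_split -sumrB /=; apply: eq_bigr => j _; ring.
  rewrite d0 addr0; apply: imul_sum => j.
  case: (imul_rmod M (x j + obf_t E a r j)) => z1 e1.
  case: (imul_rmod M (d j)) => z2 e2.
  exists (z1 + z2); rewrite intrD mulrDl -e1 -e2 /xt /perturbed /obf_t.
  by [].
case: hI => z hz.
have -> : \sum_(j < m) xt j = \sum_(j < m) x j + z%:~R * M by rewrite -hz; ring.
rewrite rmod_shift // rmod_id //; apply/andP; split.
  by apply: sumr_ge0 => j _; case/andP: (hx j).
have -> : M = \sum_(j < m) a by rewrite sumr_const card_ord /M mulr_natl.
apply: ltr_sum; first by apply/hasP; exists (Ordinal mpos); rewrite ?mem_index_enum.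
by move=> j _; case/andP: (hx j).
Qed.
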